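(* Let $n\ge2$, $f\in C^n(\mathbb{R})$, $2\le\kappa\le n$, $\alpha=(\alpha_0,\dots,\alpha_\kappa)\in\mathbb{N}_{\ge0}^{\kappa+1}$ with $|\alpha|\le n+1$, and $(\lambda_0,\dots,\lambda_\kappa)\in\mathbb{R}^{\kappa+1}$ such that for some $i\ne j$ we have $\lambda_i\ne\lambda_j$ and $\alpha_i,\alpha_j>0$. Then for every $k\in\{0,\dots,\kappa\}\setminus\{i,j\}$, \begin{align*} f[\lambda_i^{(\alpha_i)},\lambda_k^{(\alpha_k)},\lambda_j^{(\alpha_j)},\widetilde\lambda^{(\widetilde\alpha)}] =&\sum_{l=0}^{\alpha_i-1}p_{\alpha_j,l}\Big(\frac{\lambda_i-\lambda_k}{\lambda_i-\lambda_j}\Big) f[\lambda_i^{(\alpha_i-l)},\lambda_k^{(\alpha_k+\alpha_j+l)},\widetilde\lambda^{(\widetilde\alpha)}]\\ &+\sum_{l=0}^{\alpha_j-1}p_{\alpha_i,l}\Big(\frac{\lambda_k-\lambda_j}{\lambda_i-\lambda_j}\Big) f[\lambda_k^{(\alpha_k+\alpha_i+l)},\lambda_j^{(\alpha_j-l)},\widetilde\lambda^{(\widetilde\alpha)}], \end{align*} where $\widetilde\lambda^{(\widetilde\alpha)}$ denotes the list of the remaining variables $\lambda_m^{(\alpha_m)}$, $m\in\{0,\dots,\kappa\}\setminus\{i,j,k\}$, and $p_{a,l}(x)=\binom{a+l-1}{l}x^{a}(1-x)^{l}$.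
   Context: Divided differences: for $f\in C^n(\mathbb{R})$ set $f^{[0]}=f$ and for $1\le k\le n$, $f^{[k]}(\lambda_0,\lambda_1,\lambda)=\frac{f^{[k-1]}(\lambda_0,\lambda)-f^{[k-1]}(\lambda_1,\lambda)}{\lambda_0-\lambda_1}$ if $\lambda_0\ne\lambda_1$, and $=\frac{d}{d\mu}f^{[k-1]}(\mu,\lambda)|_{\mu=\lambda_0}$ if $\lambda_0=\lambda_1$; these are symmetric in their arguments. Notation: for reals $\mu_0,\dots,\mu_m$ and nonnegative integers $\beta_0,\dots,\beta_m$ with $N=\sum\beta_r\ge1$, $f[\mu_0^{(\beta_0)},\dots,\mu_m^{(\beta_m)}]:=f^{[N-1]}$ evaluated at the list in which $\mu_r$ is repeated $\beta_r$ times. *)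

(* Defs.v *)
From Stdlib Require Import Reals List Arith.
From Coquelicot Require Import Coquelicot.
Import ListNotations.
Open Scope R_scope.

Definition Cn (n : nat) (f : R -> R) : Prop :=
  (forall (m : nat) (x : R), (m <= n)%nat -> ex_derive_n f m x) /\
  (forall x : R, continuous (Derive_n f n) x).

(* ddk f k l = f^{[k]} evaluated at the list l (expected length k+1).
   f^{[0]} = f;  f^{[k]}(x0,x1,rest) = (f^{[k-1]}(x0,rest) - f^{[k-1]}(x1,rest))/(x0-x1)
   if x0 <> x1, and d/dmu f^{[k-1]}(mu,rest) at mu = x0 if x0 = x1. *)
Fixpoint ddk (f : R -> R) (k : nat) (l : list R) : R :=
  match k with
  | O => f (hd 0 l)
  | S k' =>
      match l with
      | x0 :: x1 :: rest =>
          if Req_EM_T x0 x1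
          then Derive (fun mu => ddk f k' (mu :: rest)) x0
          else (ddk f k' (x0 :: rest) - ddk f k' (x1 :: rest)) / (x0 - x1)
      | _ => 0
      end
  end.

Definition dd (f : R -> R) (l : list R) : R := ddk f (length l - 1) l.

(* The list mu_0^(beta_0), ..., mu_m^(beta_m) given as a list of blocks. *)
Definition blocks (bs : list (R * nat)) : list R :=
  flat_map (fun p => repeat (fst p) (snd p)) bs.

Definition sumR (n : nat) (g : nat -> R) : R :=
  fold_right Rplus 0 (map g (seq 0 n)).

Definition sumN (n : nat) (g : nat -> nat) : nat :=
  fold_right Nat.add 0%nat (map g (seq 0 n)).

Definition pal (a l : nat) (x : R) : R :=
  Binomial.C (a + l - 1) l * x ^ a * (1 - x) ^ l.

Definition rest_blocks (kappa : nat) (lam : nat -> R) (alpha : nat -> nat)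
  (i j k : nat) : list (R * nat) :=
  map (fun m => (lam m, alpha m))
    (filter (fun m => negb (Nat.eqb m i || Nat.eqb m j || Nat.eqb m k))
       (seq 0 (S kappa))).

(* Main.v *)
Require Import Defs.
From Stdlib Require Import Reals List Arith Lra Lia.
From Coquelicot Require Import Coquelicot.
Import ListNotations.
Open Scope R_scope.

Definition Ap (x : R) (p : nat) (v : R -> R) (mu : R) : R :=
  RInt (fun t => t ^ p * v (x + t * (mu - x))) 0 1.

Lemma c2d_aff (x : R) (p : nat) (w : R -> R) t mu :
  continuous w (x + t * (mu - x)) ->
  continuity_2d_pt (fun t mu => t ^ p * w (x + t * (mu - x))) t mu.
Proof.
  intros Hw.
  apply continuity_2d_pt_mult.
  - apply (continuity_1d_2d_pt_comp (fun z => z ^ p) (fun u v => u)).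
    + apply derivable_continuous_pt, derivable_pt_pow.
    + apply continuity_2d_pt_id1.
  - apply (continuity_1d_2d_pt_comp w (fun u v => x + u * (v - x))).
    + now apply continuity_pt_filterlim.
    + apply continuity_2d_pt_plus. apply continuity_2d_pt_const.
      apply continuity_2d_pt_mult. apply continuity_2d_pt_id1.
      apply continuity_2d_pt_minus. apply continuity_2d_pt_id2. apply continuity_2d_pt_const.
Qed.

Lemma c2d_aff2 (x : R) (p : nat) (w : R -> R) mu t :
  continuous w (x + t * (mu - x)) ->
  continuity_2d_pt (fun mu t => t ^ p * w (x + t * (mu - x))) mu t.
Proof.
  intros Hw.
  apply continuity_2d_pt_mult.
  - apply (continuity_1d_2d_pt_comp (fun z => z ^ p) (fun u v => v)).
    + apply derivable_continuous_pt, derivable_pt_pow.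
    + apply continuity_2d_pt_id2.
  - apply (continuity_1d_2d_pt_comp w (fun u v => x + v * (u - x))).
    + now apply continuity_pt_filterlim.
    + apply continuity_2d_pt_plus. apply continuity_2d_pt_const.
      apply continuity_2d_pt_mult. apply continuity_2d_pt_id2.
      apply continuity_2d_pt_minus. apply continuity_2d_pt_id1. apply continuity_2d_pt_const.
Qed.

Lemma ex_RInt_Ap x p w mu : (forall z, continuous w z) ->
  ex_RInt (fun t => t ^ p * w (x + t * (mu - x))) 0 1.
Proof.
  intros Hw. apply (ex_RInt_continuous (V:=R_CompleteNormedModule)). intros z _.
  apply (continuous_mult (fun t => t ^ p) (fun t => w (x + t * (mu - x)))).
  - apply continuity_pt_filterlim, derivable_continuous_pt, derivable_pt_pow.
  - apply (continuous_comp (fun t => x + t * (mu - x)) w). 2: apply Hw.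
    apply continuity_pt_filterlim. reg.
Qed.

Lemma Ap_cont x p w : (forall z, continuous w z) -> forall mu0, continuous (Ap x p w) mu0.
Proof.
  intros Hw mu0. apply continuity_pt_filterlim.
  intros eps Heps.
  destruct (uniform_continuity_2d_1d (fun t mu => t ^ p * w (x + t * (mu - x))) 0 1 mu0)
    with (eps := mkposreal (eps/2) ltac:(lra)) as [d Hd].
  { intros t _. apply c2d_aff. apply Hw. }
  exists d. split. apply cond_pos.
  intros mu [_ Hmu]. simpl in Hmu. unfold R_dist in Hmu. simpl. unfold R_dist.
  unfold Ap. rewrite <- (RInt_minus (V:=R_CompleteNormedModule)); try apply ex_RInt_Ap; auto.
  eapply Rle_lt_trans.
  apply (abs_RInt_le_const _ 0 1 (eps/2)). lra.
  apply (ex_RInt_minus (V:=R_CompleteNormedModule)); apply ex_RInt_Ap; auto.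
  intros t Ht. apply Rlt_le. pose proof (cond_pos d) as Hd0.
  unfold minus, plus, opp; simpl.
  apply (Hd t mu0 t mu Ht ltac:(simpl; lra) Ht).
  simpl. apply Rabs_def2 in Hmu. lra.
  rewrite Rminus_eq_0, Rabs_R0. apply cond_pos.
  lra.
Qed.

Lemma Ap_deriv_pt x p v t u : (forall z, ex_derive v z) ->
  is_derive (fun z => t ^ p * v (x + t * (z - x))) u (t ^ S p * Derive v (x + t * (u - x))).
Proof.
  intros Hv.
  assert (Hi: is_derive (fun z => x + t*(z-x)) u t) by (auto_derive; [easy| ring]).
  assert (Hc := is_derive_comp v (fun z => x + t*(z-x)) u _ _ (Derive_correct _ _ (Hv _)) Hi).
  assert (Hs := is_derive_scal _ u (t ^ p) _ Hc).
  replace (t ^ S p * Derive v (x + t * (u - x))) with (t ^ p * scal t (Derive v (x + t * (u - x)))).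
  exact Hs. simpl. unfold scal; simpl; unfold mult; simpl. ring.
Qed.

Lemma Ap_deriv x p v : (forall z, ex_derive v z) -> (forall z, continuous (Derive v) z) ->
  forall mu0, is_derive (Ap x p v) mu0 (Ap x (S p) (Derive v) mu0).
Proof.
  intros Hv Hdv mu0.
  assert (Hw : forall z, continuous v z) by (intros; apply ex_derive_continuous, Hv).
  unfold Ap.
  replace (RInt (fun t => t ^ S p * Derive v (x + t * (mu0 - x))) 0 1) with
    (RInt (fun t => Derive (fun u => t ^ p * v (x + t * (u - x))) mu0) 0 1).
  apply (is_derive_RInt_param (fun u t => t ^ p * v (x + t * (u - x))) 0 1 mu0).
  - apply filter_forall. intros y t _. eexists. apply Ap_deriv_pt, Hv.
  - intros t _.
    apply continuity_2d_pt_ext with (f := fun u t => t ^ S p * Derive v (x + t * (u - x))).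
    intros u t'. symmetry. apply is_derive_unique, Ap_deriv_pt, Hv.
    apply (c2d_aff2 x (S p) (Derive v) mu0 t). apply Hdv.
  - apply filter_forall. intros y. apply ex_RInt_Ap. exact Hw.
  - apply RInt_ext. intros t _. apply is_derive_unique, Ap_deriv_pt, Hv.
Qed.

Lemma Cn_ext s g1 g2 : (forall t, g1 t = g2 t) -> Cn s g1 -> Cn s g2.
Proof.
  intros He [H1 H2]. split.
  - intros m z Hm. eapply ex_derive_n_ext. exact He. apply H1, Hm.
  - intros z. eapply continuous_ext. 2: apply (H2 z).
    intros t. apply Derive_n_ext. exact He.
Qed.

Lemma Cn_cont s g : Cn s g -> forall z, continuous g z.
Proof.
  intros [H1 H2] z. destruct s as [|s].
  - apply H2.
  - apply (ex_derive_continuous (K:=R_AbsRing) (V:=R_NormedModule)). apply (H1 1%nat z). lia.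
Qed.

Lemma Cn_ex_derive s g : Cn (S s) g -> forall z, ex_derive g z.
Proof. intros [H1 _] z. apply (H1 1%nat z). lia. Qed.

Lemma Ap_smooth_aux x s u : Cn s u -> forall q, (q <= s)%nat ->
  (forall mu, ex_derive_n (Ap x 0 u) q mu) /\
  (forall mu, Derive_n (Ap x 0 u) q mu = Ap x q (Derive_n u q) mu).
Proof.
  intros [Hu1 Hu2]. induction q as [|q IH]; intros Hq.
  - split; intros; simpl; auto.
  - destruct IH as [_ IH2]. lia.
    assert (Hv : forall z, ex_derive (Derive_n u q) z) by (intros z; apply (Hu1 (S q) z Hq)).
    assert (Hdv : forall z, continuous (Derive (Derive_n u q)) z).
    { intros z. destruct (Nat.eq_dec (S q) s) as [E|E].
      - subst s. apply Hu2.
      - apply (ex_derive_continuous (K:=R_AbsRing) (V:=R_NormedModule)). apply (Hu1 (S (S q)) z). lia. }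
    split; intros mu.
    + simpl. eapply ex_derive_ext. intros t; symmetry; apply IH2.
      eexists. apply Ap_deriv; auto.
    + simpl. rewrite (Derive_ext _ _ _ IH2).
      apply is_derive_unique. apply Ap_deriv; auto.
Qed.

Lemma Ap_smooth x s u : Cn s u -> Cn s (Ap x 0 u).
Proof.
  intros Hu. split.
  - intros m z Hm. apply (Ap_smooth_aux x s u Hu m Hm).
  - intros z. eapply continuous_ext.
    intros t. symmetry. apply (Ap_smooth_aux x s u Hu s (le_n _)).
    apply Ap_cont. apply Hu.
Qed.

Lemma Cn_Derive s h : Cn (S s) h -> Cn s (Derive h).
Proof.
  intros [H1 H2].
  assert (E : forall m z, Derive_n (Derive h) m z = Derive_n h (S m) z).
  { intros m z. rewrite <- Nat.add_1_r. rewrite <- Derive_n_comp. reflexivity. }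
  split.
  - intros [|m] z Hm. exact I.
    simpl. eapply ex_derive_ext. intros t; symmetry; apply E.
    apply (H1 (S (S m)) z). lia.
  - intros z. eapply continuous_ext. intros t; symmetry; apply E. apply H2.
Qed.

Lemma quot_smooth s h x : Cn (S s) h ->
  Cn s (fun mu => if Req_EM_T mu x then Derive h x else (h mu - h x) / (mu - x)).
Proof.
  intros Hh.
  assert (HD := Cn_Derive s h Hh).
  apply Cn_ext with (g1 := Ap x 0 (Derive h)). 2: apply Ap_smooth, HD.
  intros mu. unfold Ap. destruct (Req_EM_T mu x) as [E|E].
  - subst mu. rewrite (RInt_ext _ (fun _ => Derive h x)).
    rewrite RInt_const. unfold scal; simpl; unfold mult; simpl. ring.
    intros t _. replace (x + t*(x-x)) with x by ring. apply Rmult_1_l.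
  - apply is_RInt_unique.
    assert (Hr := is_RInt_derive (V:=R_CompleteNormedModule)
       (fun t => h (x + t * (mu - x)) / (mu - x))
       (fun t => t ^ 0 * Derive h (x + t * (mu - x))) 0 1).
    replace ((h mu - h x) / (mu - x)) with
       (minus (h (x + 1 * (mu - x)) / (mu - x)) (h (x + 0 * (mu - x)) / (mu - x))).
    apply Hr.
    + intros t _.
      assert (Hi: is_derive (fun z => x + z*(mu-x)) t (mu - x)) by (auto_derive; [easy| ring]).
      assert (Hc := is_derive_comp h (fun z => x + z*(mu-x)) t _ _
          (Derive_correct _ _ (Cn_ex_derive _ _ Hh _)) Hi).
      assert (Hs := is_derive_scal _ t (/ (mu - x)) _ Hc).
      assert (E' : mu - x <> 0) by lra.
      eapply is_derive_ext. 2: {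
        replace (t ^ 0 * Derive h (x + t * (mu - x))) with
          (/ (mu - x) * scal (mu - x) (Derive h (x + t * (mu - x)))).
        exact Hs. unfold scal; simpl; unfold mult; simpl. field. exact E'. }
      intros z; simpl. unfold Rdiv. ring.
    + intros t _. apply (continuous_mult (fun t => t ^ 0) (fun t => Derive h (x + t * (mu - x)))).
      apply continuous_const.
      apply (continuous_comp (fun t => x + t * (mu - x)) (Derive h)).
      apply continuity_pt_filterlim. reg.
      apply (Cn_cont s). exact HD.
    + unfold minus, plus, opp; simpl. replace (x + 1 * (mu - x)) with mu by ring.
      replace (x + 0 * (mu - x)) with x by ring. field. lra.
Qed.

Lemma ddk_smooth n f : Cn n f -> forall m, (m <= n)%nat -> forall r,
  Cn (n - m) (fun mu => ddk f m (mu :: r)).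
Proof.
  intros Hf. induction m as [|m IH]; intros Hm r.
  - rewrite Nat.sub_0_r. eapply Cn_ext. 2: exact Hf. intros t; reflexivity.
  - destruct r as [|x1 r'].
    + simpl. split. intros; apply ex_derive_n_const.
      intros z. destruct (n - S m)%nat; simpl. apply continuous_const.
      eapply continuous_ext. intros t. symmetry. apply (Derive_n_const n0 0 t).
      apply continuous_const.
    + assert (Hs := quot_smooth (n - S m) (fun nu => ddk f m (nu :: r')) x1).
      replace (S (n - S m)) with (n - m)%nat in Hs by lia.
      specialize (Hs (IH ltac:(lia) r')).
      eapply Cn_ext. 2: exact Hs. intros mu. simpl.
      destruct (Req_EM_T mu x1) as [E|E]. subst; reflexivity. reflexivity.
Qed.

From Stdlib Require Import Permutation.

Lemma ddk_unfold2 f m a b l : ddk f (S m) (a::b::l) =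
  if Req_EM_T a b then Derive (fun mu => ddk f m (mu::l)) a
  else (ddk f m (a::l) - ddk f m (b::l)) / (a - b).
Proof. reflexivity. Qed.

Lemma locally_neq (a b : R) : a <> b -> locally a (fun mu => mu <> b).
Proof.
  intros H. assert (Hp : 0 < Rabs (a - b)) by (apply Rabs_pos_lt; lra).
  exists (mkposreal _ Hp). intros y Hy E. subst y.
  unfold ball in Hy; simpl in Hy. unfold AbsRing_ball, abs, minus, plus, opp in Hy; simpl in Hy.
  rewrite <- Rabs_Ropp in Hy. replace (- (b + - a)) with (a - b) in Hy by ring. lra.
Qed.

Lemma deriv_quot (f : R -> R) (m : nat) (l : list R) (a b : R) : ex_derive (fun mu : R => ddk f m (mu::l)) a -> a <> b ->
  Derive (fun mu : R => ddk f (S m) (mu::b::l)) a =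
  (Derive (fun mu : R => ddk f m (mu::l)) a * (a - b) - (ddk f m (a::l) - ddk f m (b::l))) / (a - b)^2.
Proof.
  intros HG Hab. set (G := fun mu => ddk f m (mu::l)).
  apply is_derive_unique.
  apply is_derive_ext_loc with (f := fun mu => (G mu - G b) / (mu - b)).
  - eapply filter_imp. 2: apply (locally_neq a b Hab).
    intros mu Hmu. simpl. destruct (Req_EM_T mu b). contradiction. reflexivity.
  - auto_derive. split. exact HG. split. lra. easy.
    unfold G. simpl. set (D := Derive _ a). assert (Hn : a - b <> 0) by lra. clearbody D. revert D Hn. generalize (ddk f m (a :: l)) (ddk f m (b :: l)). generalize a b. intros. field. exact Hn.
Qed.

Ltac fld := repeat match goal with |- context [Derive ?g ?p] =>
    let D := fresh "D" in set (D := Derive g p); clearbody D end;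
  repeat match goal with |- context [ddk ?f ?k ?l] =>
    let D := fresh "D" in set (D := ddk f k l); clearbody D end; field.

Lemma ddk_sym n f : Cn n f -> forall k, (k <= n)%nat -> forall l l',
  length l = S k -> Permutation l l' -> ddk f k l = ddk f k l'.
Proof.
  intros Hf k. induction k as [|k IH]; intros Hk l l' Hl Hp.
  - destruct l as [|a [|b l]]; simpl in Hl; try lia.
    apply Permutation_length_1_inv in Hp. subst. reflexivity.
  - assert (Inner : forall l1 l2, Permutation l1 l2 -> length l1 = S k ->
               forall x, ddk f (S k) (x::l1) = ddk f (S k) (x::l2)).
    { intros l1 l2 Hp12.
      induction Hp12 as [| y l1 l2 Hp12 IHp | y z l1 | l1 l2 l3 H12 IH12 H23 IH23];
        intros Hlen x.
      - reflexivity.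
      - rewrite !ddk_unfold2. simpl in Hlen.
        assert (E : forall mu, ddk f k (mu::l1) = ddk f k (mu::l2)).
        { intros mu. apply IH. lia. simpl; lia. now apply perm_skip. }
        destruct (Req_EM_T x y). apply Derive_ext; auto. rewrite !E; reflexivity.
      - destruct k as [|k']. simpl in Hlen; lia.
        simpl in Hlen.
        assert (Hd : forall a, ex_derive (fun mu => ddk f k' (mu :: l1)) a).
        { intros a. apply (Cn_ex_derive (n - S k')).
          replace (S (n - S k')) with (n - k')%nat by lia.
          apply ddk_smooth; auto. lia. }
        rewrite (ddk_unfold2 f (S k') x y), (ddk_unfold2 f (S k') x z).
        destruct (Req_EM_T x y) as [Exy|Nxy]; destruct (Req_EM_T x z) as [Exz|Nxz].
        + subst; reflexivity.
        + subst y. rewrite deriv_quot; auto.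
          rewrite (ddk_unfold2 f k' x x), (ddk_unfold2 f k' z x).
          destruct (Req_EM_T x x) as [_|C]; [|now contradiction C].
          destruct (Req_EM_T z x) as [C|_]; [subst; now contradiction Nxz|].
          fld. split; lra.
        + subst z. rewrite deriv_quot; auto.
          rewrite (ddk_unfold2 f k' x x), (ddk_unfold2 f k' y x).
          destruct (Req_EM_T x x) as [_|C]; [|now contradiction C].
          destruct (Req_EM_T y x) as [C|_]; [subst; now contradiction Nxy|].
          fld. split; lra.
        + rewrite !ddk_unfold2.
          destruct (Req_EM_T y z) as [Eyz|Nyz]; destruct (Req_EM_T z y) as [Ezy|Nzy].
          * subst; reflexivity.
          * subst; contradiction.
          * subst; contradiction.
          * destruct (Req_EM_T x y); [contradiction|]. destruct (Req_EM_T x z); [contradiction|].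
            fld. repeat split; lra.
      - rewrite IH12 by exact Hlen. apply IH23.
        rewrite <- (Permutation_length H12). exact Hlen. }
    induction Hp as [| x l1 l2 Hp12 IHp | y x l | l1 l2 l3 H12 IH12 H23 IH23].
    + reflexivity.
    + apply Inner. exact Hp12. simpl in Hl; lia.
    + rewrite !ddk_unfold2.
      destruct (Req_EM_T y x) as [E1|N1]; destruct (Req_EM_T x y) as [E2|N2].
      * subst; reflexivity.
      * subst; contradiction.
      * subst; contradiction.
      * field. split; lra.
    + rewrite IH12 by exact Hl. apply IH23.
      rewrite <- (Permutation_length H12). exact Hl.
Qed.

Lemma sumR_S n g : sumR (S n) g = g 0%nat + sumR n (fun l => g (S l)).
Proof.
  unfold sumR. simpl. f_equal. rewrite <- seq_shift, map_map. reflexivity.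
Qed.

Lemma sumR_ext n g h : (forall l, (l < n)%nat -> g l = h l) -> sumR n g = sumR n h.
Proof.
  intros H. unfold sumR. f_equal. apply map_ext_in. intros a Ha.
  apply in_seq in Ha. apply H. lia.
Qed.

Lemma sumR_plus n g h : sumR n (fun l => g l + h l) = sumR n g + sumR n h.
Proof.
  unfold sumR. generalize (seq 0 n). induction l; simpl. ring. rewrite IHl. ring.
Qed.

Lemma sumR_scal n c g : sumR n (fun l => c * g l) = c * sumR n g.
Proof.
  unfold sumR. generalize (seq 0 n). induction l; simpl. ring. rewrite IHl. ring.
Qed.

Lemma sumR_zero n g : (forall l, g l = 0) -> sumR n g = 0.
Proof.
  intros H. unfold sumR. generalize (seq 0 n). induction l; simpl. ring. rewrite IHl, H. ring.
Qed.

Fixpoint bn (n k : nat) : nat :=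
  match n, k with
  | _, O => 1%nat
  | O, S _ => 0%nat
  | S n', S k' => (bn n' k' + bn n' (S k'))%nat
  end.

Lemma bn_0 m : bn m 0 = 1%nat.
Proof. destruct m; reflexivity. Qed.

Lemma bn_lt : forall n k, (n < k)%nat -> bn n k = 0%nat.
Proof.
  induction n; intros [|k] H; simpl; try lia; auto.
  rewrite !IHn; lia.
Qed.

Lemma bn_C : forall n k, (k <= n)%nat -> INR (bn n k) = Binomial.C n k.
Proof.
  induction n; intros [|k] H.
  - rewrite C_n_0. reflexivity.
  - lia.
  - rewrite bn_0, C_n_0. reflexivity.
  - simpl bn. rewrite plus_INR.
    destruct (Nat.eq_dec k n) as [E|E].
    + subst. rewrite (bn_lt n (S n)) by lia. rewrite IHn by lia. rewrite !C_n_n. simpl; ring.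
    + rewrite !IHn by lia. apply pascal. lia.
Qed.

Definition mp (a l : nat) (z : R) : R := INR (bn (a + l - 1) l) * z ^ a * (1 - z) ^ l.

Lemma mp_pal a l z : (1 <= a)%nat -> mp a l z = pal a l z.
Proof. intros H. unfold mp, pal. rewrite bn_C by lia. reflexivity. Qed.

Lemma mp_pascal b l z : mp (S b) (S l) z = z * mp b (S l) z + (1 - z) * mp (S b) l z.
Proof.
  unfold mp. replace (S b + S l - 1)%nat with (S (b + l)) by lia.
  replace (b + S l - 1)%nat with (b + l)%nat by lia.
  replace (S b + l - 1)%nat with (b + l)%nat by lia.
  simpl bn. rewrite plus_INR. simpl pow. ring.
Qed.

Lemma mp_pascal0 b z : mp (S b) 0 z = z * mp b 0 z.
Proof. unfold mp. rewrite !bn_0. simpl. ring. Qed.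

Lemma mp_00 z : mp 0 0 z = 1.
Proof. unfold mp. simpl. ring. Qed.

Lemma mp_0S l z : mp 0 (S l) z = 0.
Proof. unfold mp. replace (0 + S l - 1)%nat with l by lia. rewrite bn_lt by lia. simpl. ring. Qed.

Lemma comb (F : nat -> nat -> nat -> R) (x : R) (M : nat) :
  (forall a c b, (S a + c + S b <= M)%nat ->
     F (S a) c (S b) = x * F (S a) (S c) b + (1 - x) * F a (S c) (S b)) ->
  forall s a b c, (a + b)%nat = s -> (1 <= a + b)%nat -> (a + c + b <= M)%nat ->
  F a c b = sumR a (fun l => mp b l x * F (a - l)%nat (c + b + l)%nat 0%nat)
          + sumR b (fun l => mp a l (1 - x) * F 0%nat (c + a + l)%nat (b - l)%nat).
Proof.
  intros Hrec s. induction s as [|s IH]; intros a b c Hs H1 HM.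
  - lia.
  - destruct a as [|a'], b as [|b'].
    + lia.
    + rewrite sumR_S. rewrite mp_00. rewrite (sumR_zero b'). 2: { intros l. rewrite mp_0S. ring. }
      unfold sumR at 1; simpl. replace (c + 0 + 0)%nat with c by lia. ring.
    + rewrite sumR_S. rewrite mp_00. rewrite (sumR_zero a'). 2: { intros l. rewrite mp_0S. ring. }
      unfold sumR at 1; simpl. replace (c + 0 + 0)%nat with c by lia. ring.
    + rewrite Hrec by lia.
      rewrite (IH (S a') b' (S c)) by lia.
      rewrite (IH a' (S b') (S c)) by lia.
      rewrite !sumR_S.
      assert (EG : sumR a' (fun l => mp (S b') (S l) x * F (S a' - S l)%nat (c + S b' + S l)%nat 0%nat)
        = x * sumR a' (fun l => mp b' (S l) x * F (S a' - S l)%nat (S c + b' + S l)%nat 0%nat)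
          + (1 - x) * sumR a' (fun l => mp (S b') l x * F (a' - l)%nat (S c + S b' + l)%nat 0%nat)).
      { rewrite <- !sumR_scal, <- sumR_plus. apply sumR_ext. intros l _.
        rewrite mp_pascal. simpl (S a' - S l)%nat.
        replace (c + S b' + S l)%nat with (S c + S b' + l)%nat by lia.
        replace (S c + b' + S l)%nat with (S c + S b' + l)%nat by lia. ring. }
      assert (EH : sumR b' (fun l => mp (S a') (S l) (1 - x) * F 0%nat (c + S a' + S l)%nat (S b' - S l)%nat)
        = x * sumR b' (fun l => mp (S a') l (1 - x) * F 0%nat (S c + S a' + l)%nat (b' - l)%nat)
          + (1 - x) * sumR b' (fun l => mp a' (S l) (1 - x) * F 0%nat (S c + a' + S l)%nat (S b' - S l)%nat)).
      { rewrite <- !sumR_scal, <- sumR_plus. apply sumR_ext. intros l _.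
        rewrite mp_pascal. simpl (S b' - S l)%nat.
        replace (c + S a' + S l)%nat with (S c + S a' + l)%nat by lia.
        replace (S c + a' + S l)%nat with (S c + S a' + l)%nat by lia. ring. }
      rewrite EG, EH, mp_pascal0, (mp_pascal0 a').
      replace (c + S b' + 0)%nat with (S c + b' + 0)%nat by lia.
      replace (c + S a' + 0)%nat with (S c + a' + 0)%nat by lia.
      ring.
Qed.

Definition sumL (s : list nat) (g : nat -> nat) : nat := fold_right Nat.add 0%nat (map g s).

Lemma sumL_filter (P : nat -> bool) g s :
  (sumL (filter P s) g + sumL (filter (fun m => negb (P m)) s) g = sumL s g)%nat.
Proof.
  unfold sumL. induction s as [|a s IH]; simpl. reflexivity.
  destruct (P a); simpl; lia.
Qed.

Lemma sumL_perm g s s' : Permutation s s' -> sumL s g = sumL s' g.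
Proof.
  unfold sumL. induction 1; simpl; lia.
Qed.

Lemma blocks_length (lam : nat -> R) (alpha : nat -> nat) s :
  length (blocks (map (fun m => (lam m, alpha m)) s)) = sumL s alpha.
Proof.
  unfold sumL, blocks. induction s as [|a s IH]; simpl. reflexivity.
  rewrite length_app, repeat_length, IH. reflexivity.
Qed.

Lemma rest_length kappa lam alpha i j k :
  (i <= kappa)%nat -> (j <= kappa)%nat -> (k <= kappa)%nat -> i <> j -> k <> i -> k <> j ->
  (length (blocks (rest_blocks kappa lam alpha i j k)) + alpha i + alpha j + alpha k
    = sumN (S kappa) alpha)%nat.
Proof.
  intros Hi Hj Hk Hij Hki Hkj.
  unfold rest_blocks. rewrite blocks_length.
  set (P := fun m => negb (Nat.eqb m i || Nat.eqb m j || Nat.eqb m k)).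
  assert (E : sumN (S kappa) alpha = sumL (seq 0 (S kappa)) alpha) by reflexivity.
  rewrite E, <- (sumL_filter P alpha (seq 0 (S kappa))).
  assert (Hp : Permutation (filter (fun m => negb (P m)) (seq 0 (S kappa))) [i; j; k]).
  { apply NoDup_Permutation.
    - apply NoDup_filter, seq_NoDup.
    - constructor. simpl. intros [H|[H|H]]; lia.
      constructor. simpl. intros [H|H]; lia.
      constructor. simpl; tauto. constructor.
    - intros m. rewrite filter_In, in_seq. unfold P. rewrite Bool.negb_involutive.
      simpl. rewrite !Bool.orb_true_iff, !Nat.eqb_eq. split.
      + intros [_ [[H|H]|H]]; subst; tauto.
      + intros [H|[H|[H|H]]]; subst; try tauto; lia. }
  rewrite (sumL_perm _ _ _ Hp). unfold sumL; simpl. lia.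
Qed.

Lemma dd_ddk f l m : length l = S m -> dd f l = ddk f m l.
Proof. intros H. unfold dd. rewrite H. simpl. rewrite Nat.sub_0_r. reflexivity. Qed.

Theorem corollary3p2 (n : nat) (f : R -> R) (kappa : nat)
  (alpha : nat -> nat) (lam : nat -> R) (i j : nat) :
  (2 <= n)%nat -> Cn n f ->
  (2 <= kappa)%nat -> (kappa <= n)%nat ->
  (sumN (S kappa) alpha <= S n)%nat ->
  (i <= kappa)%nat -> (j <= kappa)%nat -> i <> j ->
  lam i <> lam j -> (0 < alpha i)%nat -> (0 < alpha j)%nat ->
  forall k : nat, (k <= kappa)%nat -> k <> i -> k <> j ->
  let rest := rest_blocks kappa lam alpha i j k in
  dd f (blocks ((lam i, alpha i) :: (lam k, alpha k) :: (lam j, alpha j) :: rest))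
  = sumR (alpha i) (fun l =>
      pal (alpha j) l ((lam i - lam k) / (lam i - lam j)) *
      dd f (blocks ((lam i, (alpha i - l)%nat) :: (lam k, (alpha k + alpha j + l)%nat) :: rest)))
  + sumR (alpha j) (fun l =>
      pal (alpha i) l ((lam k - lam j) / (lam i - lam j)) *
      dd f (blocks ((lam k, (alpha k + alpha i + l)%nat) :: (lam j, (alpha j - l)%nat) :: rest))).
Proof.
  intros Hn Hf Hk2 Hkn Hsum Hi Hj Hij Hlij Hai Haj k Hk Hki Hkj rest.
  assert (HL := rest_length kappa lam alpha i j k Hi Hj Hk Hij Hki Hkj).
  fold rest in HL. set (R0 := blocks rest) in *.
  set (F := fun a c b => dd f (blocks ((lam i,a)::(lam k,c)::(lam j,b)::rest))).
  set (x := (lam i - lam k) / (lam i - lam j)).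
  assert (Hlij' : lam i - lam j <> 0) by lra.
  assert (Hrec : forall a c b, (S a + c + S b <= alpha i + alpha k + alpha j)%nat ->
     F (S a) c (S b) = x * F (S a) (S c) b + (1 - x) * F a (S c) (S b)).
  { intros a c b Hb.
    set (S0 := repeat (lam i) a ++ (repeat (lam k) c ++ (repeat (lam j) b ++ R0))).
    set (m := length S0).
    assert (Hm : (S m <= n)%nat).
    { unfold m, S0. rewrite !length_app, !repeat_length. lia. }
    assert (Q1 : Permutation (lam j :: S0)
        (repeat (lam i) a ++ (repeat (lam k) c ++ (lam j :: repeat (lam j) b ++ R0)))).
    { rewrite (app_assoc (repeat (lam i) a) (repeat (lam k) c) (lam j :: repeat (lam j) b ++ R0)).
      apply Permutation_cons_app. unfold S0. rewrite <- app_assoc. reflexivity. }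
    assert (P1 : Permutation (blocks ((lam i, S a)::(lam k,c)::(lam j,S b)::rest)) (lam i :: lam j :: S0)).
    { simpl. apply perm_skip. fold R0. apply Permutation_sym. exact Q1. }
    assert (P2 : Permutation (blocks ((lam i, S a)::(lam k,S c)::(lam j,b)::rest)) (lam i :: lam k :: S0)).
    { simpl. apply perm_skip. fold R0. apply Permutation_sym.
      apply Permutation_cons_app. reflexivity. }
    assert (P3 : Permutation (blocks ((lam i, a)::(lam k,S c)::(lam j,S b)::rest)) (lam k :: lam j :: S0)).
    { simpl. fold R0. apply Permutation_sym.
      apply Permutation_cons_app. exact Q1. }
    unfold F.
    rewrite !(dd_ddk f _ (S m)) by (rewrite (Permutation_length P1) || rewrite (Permutation_length P2) || rewrite (Permutation_length P3); reflexivity).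
    rewrite (ddk_sym n f Hf (S m) Hm _ _ (eq_trans (Permutation_length P1) eq_refl) P1).
    rewrite (ddk_sym n f Hf (S m) Hm _ _ (eq_trans (Permutation_length P2) eq_refl) P2).
    rewrite (ddk_sym n f Hf (S m) Hm _ _ (eq_trans (Permutation_length P3) eq_refl) P3).
    rewrite !ddk_unfold2.
    destruct (Req_EM_T (lam i) (lam j)) as [C|_]; [contradiction|].
    unfold x.
    destruct (Req_EM_T (lam i) (lam k)) as [E|N]; destruct (Req_EM_T (lam k) (lam j)) as [E'|N'].
    - rewrite E in Hlij. contradiction.
    - rewrite <- E. fld. repeat split; lra.
    - rewrite E'. fld. repeat split; lra.
    - fld. repeat split; lra. }
  assert (Hc := comb F x (alpha i + alpha k + alpha j) Hrec (alpha i + alpha j)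
                 (alpha i) (alpha j) (alpha k) eq_refl ltac:(lia) ltac:(lia)).
  change (dd f (blocks ((lam i, alpha i) :: (lam k, alpha k) :: (lam j, alpha j) :: rest)))
    with (F (alpha i) (alpha k) (alpha j)).
  rewrite Hc. f_equal.
  - apply sumR_ext. intros l _. rewrite mp_pal by lia. reflexivity.
  - apply sumR_ext. intros l _. rewrite mp_pal by lia.
    replace ((lam k - lam j) / (lam i - lam j)) with (1 - x). reflexivity.
    unfold x. field. exact Hlij'.
Qed.
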